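(* Let $R$ be an arithmetic ring of Krull dimension $0$. Then $R$ is a Kaplansky ring and an adequate ring.
   Context: All rings are commutative with identity. $R$ is arithmetic if $R_M$ is a valuation ring (ideals totally ordered by inclusion) for every maximal ideal $M$. $R$ is Bézout if every finitely generated ideal is principal. $R$ is a Kaplansky ring (elementary divisor ring) if for every matrix $A$ over $R$ there exist invertible matrices $P,Q$ and a diagonal matrix $D$ over $R$ such that $PAQ=D$. $R$ is adequate if it is Bézout and for every $a,b\in R$ with $a\neq 0$ there exist $r,s\in R$ with $a=rs$, $Rr+Rb=R$, and $Rs'+Rb\neq R$ for every nonunit $s'$ dividing $s$. *)

(* Defs.v *)
From HB Require Import structures.
From mathcomp Require Import all_boot all_order all_algebra.
Set Implicit Arguments. Unset Strict Implicit. Unset Printing Implicit Defensive.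
Import GRing.Theory.
Local Open Scope ring_scope.

Definition is_ideal (R : comNzRingType) (I : R -> Prop) : Prop :=
  [/\ I 0, (forall x y, I x -> I y -> I (x + y)) & (forall a x, I x -> I (a * x))].

Definition prime_ideal (R : comNzRingType) (P : R -> Prop) : Prop :=
  [/\ is_ideal P, ~ P 1 & (forall a b, P (a * b) -> P a \/ P b)].

Definition maximal_ideal (R : comNzRingType) (M : R -> Prop) : Prop :=
  [/\ is_ideal M, ~ M 1 &
      (forall J : R -> Prop, is_ideal J -> (forall x, M x -> J x) ->
         J 1 \/ (forall x, J x -> M x))].

(* Krull dimension 0 : there is no chain P0 < P1 of prime ideals
   (R is nonzero, so it has a prime ideal). *)
Definition krull_dim0 (R : comNzRingType) : Prop :=
  forall P Q : R -> Prop, prime_ideal P -> prime_ideal Q ->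
    (forall x, P x -> Q x) -> forall x, Q x -> P x.

(* The localization R_M at a maximal ideal M, described concretely:
   elements are fractions r/s with s not in M, and r/s = r'/s' iff
   t (r s' - r' s) = 0 for some t not in M. *)
Definition loc_eq (R : comNzRingType) (M : R -> Prop) (r s r' s' : R) : Prop :=
  exists t, ~ M t /\ t * (r * s' - r' * s) = 0.

(* An ideal of R_M, given as the set J of fractions (r, s) (with s not in M)
   that belong to it. *)
Definition loc_ideal (R : comNzRingType) (M : R -> Prop) (J : R -> R -> Prop)
  : Prop :=
  [/\ (forall r s, J r s -> ~ M s),
      (forall r s r' s', J r s -> ~ M s' -> loc_eq M r s r' s' -> J r' s'),
      J 0 1,
      (forall r s r' s', J r s -> J r' s' -> J (r * s' + r' * s) (s * s')) &
      (forall a u r s, ~ M u -> J r s -> J (a * r) (u * s))].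

Definition loc_valuation (R : comNzRingType) (M : R -> Prop) : Prop :=
  forall J K : R -> R -> Prop, loc_ideal M J -> loc_ideal M K ->
    (forall r s, J r s -> K r s) \/ (forall r s, K r s -> J r s).

Definition arithmetic (R : comNzRingType) : Prop :=
  forall M : R -> Prop, maximal_ideal M -> loc_valuation M.

Definition in_fg_ideal (R : comNzRingType) (s : seq R) (x : R) : Prop :=
  exists c : 'I_(size s) -> R, x = \sum_(i < size s) c i * s`_i.

Definition bezout (R : comNzRingType) : Prop :=
  forall s : seq R, exists d : R,
    forall x, in_fg_ideal s x <-> exists c, x = c * d.

Definition invertible_mx (R : comNzRingType) (n : nat) (P : 'M[R]_n) : Prop :=
  exists P' : 'M[R]_n, P *m P' = 1%:M /\ P' *m P = 1%:M.

Definition is_diagonal (R : comNzRingType) (m n : nat) (D : 'M[R]_(m, n)) : Prop :=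
  forall (i : 'I_m) (j : 'I_n), (i : nat) <> j -> D i j = 0.

Definition kaplansky (R : comNzRingType) : Prop :=
  forall (m n : nat) (A : 'M[R]_(m, n)), exists (P : 'M[R]_m) (Q : 'M[R]_n),
    [/\ invertible_mx P, invertible_mx Q & is_diagonal (P *m A *m Q)].

Definition comaximal (R : comNzRingType) (x y : R) : Prop :=
  exists u v : R, u * x + v * y = 1.

Definition is_unit (R : comNzRingType) (x : R) : Prop := exists y : R, x * y = 1.

Definition divides (R : comNzRingType) (x y : R) : Prop := exists c : R, y = c * x.

Definition adequate (R : comNzRingType) : Prop :=
  bezout R /\
  forall a b : R, a <> 0 -> exists r s : R,
    [/\ a = r * s, comaximal r b &
        forall s' : R, ~ is_unit s' -> divides s' s -> ~ comaximal s' b].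

(* Main.v *)
Require Import Defs.
From mathcomp Require Import all_boot all_order all_algebra.
From mathcomp Require Import ring fingroup perm.
From mathcomp Require Import boolp classical_sets.
Set Implicit Arguments. Unset Strict Implicit. Unset Printing Implicit Defensive.
Import GRing.Theory.
Local Open Scope classical_set_scope.
Local Open Scope ring_scope.
Section Ideals.
Variable R : comNzRingType.
Implicit Types (I J M : R -> Prop) (x y a b : R).

Lemma idealN I x : is_ideal I -> I x -> I (- x).
Proof. by case=> _ _ hm hx; rewrite -mulN1r; apply: hm. Qed.

Lemma idealM I a x : is_ideal I -> I x -> I (x * a).
Proof. by case=> _ _ hm hx; rewrite mulrC; apply: hm. Qed.

Lemma idealD I x y : is_ideal I -> I x -> I y -> I (x + y).
Proof. by case=> _ hd _; apply: hd. Qed.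

Lemma ideal0 I : is_ideal I -> I 0.
Proof. by case. Qed.

Definition addid M a := fun z => exists m r, M m /\ z = m + r * a.

Lemma addid_ideal M a : is_ideal M -> is_ideal (addid M a).
Proof.
move=> hM; split.
- by exists 0, 0; split; [exact: ideal0|rewrite mul0r addr0].
- move=> x y [m [r [hm ->]]] [m' [r' [hm' ->]]].
  exists (m + m'), (r + r'); split; first exact: idealD.
  by rewrite mulrDl !addrA (addrAC m).
- move=> c x [m [r [hm ->]]]; exists (c * m), (c * r); split.
    by case: hM => _ _ h; apply: h.
  by rewrite mulrDr mulrA.
Qed.

Lemma addid_sub M a x : M x -> addid M a x.
Proof. by move=> hx; exists x, 0; rewrite mul0r addr0. Qed.

Lemma addid_a M a : is_ideal M -> addid M a a.
Proof. by move=> hM; exists 0, 1; rewrite mul1r add0r; split => //; exact: ideal0. Qed.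

Lemma max_prime M : maximal_ideal M -> prime_ideal M.
Proof.
case=> hM h1 hmax; split => // a b hab.
have [ha|ha] := pselect (M a); first by left.
right; have [J1|Jsub] := hmax (addid M a) (addid_ideal a hM) (@addid_sub M a).
- case: J1 => m [r [hm e]].
  have -> : b = m * b + r * (a * b) by rewrite mulrA -mulrDl -e mul1r.
  apply: idealD => //; first exact: idealM.
  by case: hM => _ _ h; apply: h.
- by exfalso; apply: ha; apply: Jsub; exact: addid_a.
Qed.

Definition good (S : R -> Prop) I (J : set R) :=
  [/\ is_ideal J, (forall x, I x -> J x) & (forall x, J x -> ~ S x)].

Lemma zorn_ideal (S : R -> Prop) I :
  is_ideal I -> (forall x, I x -> ~ S x) ->
  exists M, good S I M /\
    (forall J, good S I J -> (forall x, M x -> J x) -> forall x, J x -> M x).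
Proof.
move=> hI hIS.
pose P := fun J : set R => J = set0 \/ good S I J.
have [A [PA maxA]] : exists A, P A /\ forall B, A `<` B -> ~ P B.
  apply: Zorn_bigcup => F FP Ftot.
  have [[J0 FJ0 gJ0]|nF] := pselect (exists2 J, F J & good S I J); last first.
    left; apply/seteqP; split => // x [J FJ Jx].
    case: (FP J FJ) => [e|gJ]; first by rewrite e in Jx.
    by exfalso; apply: nF; exists J.
  right; split.
  - split.
    + by exists J0 => //; case: gJ0 => h _ _; exact: ideal0.
    + move=> x y [J FJ Jx] [K FK Ky].
      have gJ : good S I J by case: (FP J FJ) => // e; rewrite e in Jx.
      have gK : good S I K by case: (FP K FK) => // e; rewrite e in Ky.
      case: (Ftot J K FJ FK) => sub.
      * by exists K => //; apply: idealD; [case: gK|apply: sub|].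
      * by exists J => //; apply: idealD; [case: gJ| |apply: sub].
    + move=> c x [J FJ Jx]; exists J => //.
      have gJ : good S I J by case: (FP J FJ) => // e; rewrite e in Jx.
      by case: gJ => [[_ _ h] _ _]; apply: h.
  - by move=> x Ix; exists J0 => //; case: gJ0 => _ h _; apply: h.
  - move=> x [J FJ Jx].
    have gJ : good S I J by case: (FP J FJ) => // e; rewrite e in Jx.
    by case: gJ => _ _ h; apply: h.
have gA : good S I A.
  case: PA => // eA; exfalso; apply: (maxA I); last by right; split.
  rewrite eA; split => //; move/(_ 0 (ideal0 hI)) => //.
exists A; split => // J gJ AJ x Jx.
apply: contrapT => nAx; apply: (maxA J); last by right.
by split => // sub; apply: nAx; apply: sub.
Qed.

Lemma good_prime (S : R -> Prop) I M :
  S 1 -> (forall x y, S x -> S y -> S (x * y)) ->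
  good S I M ->
  (forall J, good S I J -> (forall x, M x -> J x) -> forall x, J x -> M x) ->
  prime_ideal M.
Proof.
move=> S1 SM [hM IM MS] maxM; split => //; first by move/MS.
move=> a b hab; apply: contrapT => /not_orP [na nb].
have ex z : ~ M z -> exists m r, M m /\ S (m + r * z).
  move=> nz; apply: contrapT => nex.
  apply: nz; apply: (maxM (addid M z)) => //; last exact: addid_a.
  split; first exact: addid_ideal.
  - by move=> x Ix; apply: addid_sub; apply: IM.
  - move=> x [m [r [hm ->]]] Sx; apply: nex; by exists m, r.
  - exact: addid_sub.
have [m1 [r1 [h1 s1]]] := ex a na.
have [m2 [r2 [h2 s2]]] := ex b nb.
apply: (MS _ _ (SM _ _ s1 s2)).
have -> : (m1 + r1 * a) * (m2 + r2 * b) =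
   m1 * (m2 + r2 * b) + m2 * (r1 * a) + (r1 * r2) * (a * b) by ring.
case: hM => _ hd0 hm0.
apply hd0; [apply hd0|]; last by apply: hm0.
- by rewrite mulrC; apply: hm0.
- by rewrite mulrC; apply: hm0.
Qed.


Lemma exists_max I : is_ideal I -> ~ I 1 -> exists M, maximal_ideal M /\ forall x, I x -> M x.
Proof.
move=> hI nI1.
have [M [[hM IM MS] maxM]] := @zorn_ideal (fun x => x = 1) I hI (fun x Ix e => nI1 (eq_ind x I Ix 1 e)).
exists M; split => //; split => //; first by move/MS.
move=> J hJ MJ; have [J1|nJ1] := pselect (J 1); first by left.
right; apply: maxM => //; split => //; first by move=> x /IM /MJ.
by move=> x Jx e; apply: nJ1; rewrite -e.
Qed.

End Ideals.

Section Jensen.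
Variable R : comNzRingType.

Definition Jx (M : R -> Prop) (x : R) := fun r s : R =>
  ~ M s /\ exists y t, ~ M t /\ t * r = y * x.

Lemma Jx_loc M x : prime_ideal M -> loc_ideal M (Jx M x).
Proof.
case=> hM M1 pM.
have nM2 s s' : ~ M s -> ~ M s' -> ~ M (s * s') by move=> h h' /pM [].
split.
- by move=> r s [].
- move=> r s r' s' [ns [y [t [nt e]]]] ns' [t' [nt' e']].
  split => //; exists (t' * s' * y), (t * t' * s); split.
    by apply nM2 => //; apply nM2.
  have e2 : t' * (r' * s) = t' * (r * s').
    by apply/eqP; rewrite eq_sym -subr_eq0 -mulrBr e'.
  have -> : t * t' * s * r' = t * (t' * (r' * s)) by ring.
  rewrite e2; have -> : t * (t' * (r * s')) = t' * s' * (t * r) by ring.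
  by rewrite e mulrA.
- split => //; exists 0, 1; split => //; by rewrite mulr0 mul0r.
- move=> r s r' s' [ns [y [t [nt e]]]] [ns' [y' [t' [nt' e']]]].
  split; first exact: (nM2 _ _).
  exists (t' * s' * y + t * s * y'), (t * t'); split; first exact: (nM2 _ _).
  have -> : t * t' * (r * s' + r' * s) = t' * s' * (t * r) + t * s * (t' * r') by ring.
  by rewrite e e'; ring.
- move=> c u r s nu [ns [y [t [nt e]]]]; split; first exact: (nM2 _ _).
  exists (c * y), t; split => //.
  by rewrite mulrCA e mulrA.
Qed.

Lemma jensen (ar : arithmetic R) (a b : R) :
  exists u c d, u * a = c * b /\ (1 - u) * b = d * a.
Proof.
pose I (t : R) := exists t1 t2 : R, t = t1 + t2 /\ (exists c : R, t1 * a = c * b) /\ (exists d : R, t2 * b = d * a).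
have hI : is_ideal I.
  split.
  - by exists 0, 0; rewrite addr0; split => //; split; exists 0; rewrite !mul0r.
  - move=> x y [t1 [t2 [-> [[c e1] [d e2]]]]] [t1' [t2' [-> [[c' e1'] [d' e2']]]]].
    exists (t1 + t1'), (t2 + t2'); split; first ring.
    split; [exists (c + c')|exists (d + d')]; rewrite !mulrDl ?e1 ?e1' ?e2 ?e2' //.
  - move=> z x [t1 [t2 [-> [[c e1] [d e2]]]]].
    exists (z * t1), (z * t2); split; first ring.
    by split; [exists (z * c)|exists (z * d)]; rewrite -!mulrA ?e1 ?e2.
have [I1|nI1] := pselect (I 1).
  case: I1 => t1 [t2 [e [[c e1] [d e2]]]].
  exists t1, c, d; split => //.
  by have -> : 1 - t1 = t2 by rewrite e; ring.
have [M [mM IM]] := exists_max hI nI1.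
have pM := max_prime mM.
case: (ar M mM (Jx M a) (Jx M b) (Jx_loc a pM) (Jx_loc b pM)) => sub.
- have [_ [y [t [nt e]]]] : Jx M b a 1.
    apply: sub; split; first by case: pM.
    by exists 1, 1; split; [case: pM|rewrite !mul1r].
  exfalso; apply: nt; apply: IM; exists t, 0; split; first by rewrite addr0.
  by split; [exists y|exists 0]; rewrite ?mul0r.
- have [_ [y [t [nt e]]]] : Jx M a b 1.
    apply: sub; split; first by case: pM.
    by exists 1, 1; split; [case: pM|rewrite !mul1r].
  exfalso; apply: nt; apply: IM; exists 0, t; split; first by rewrite add0r.
  by split; [exists 0|exists y]; rewrite ?mul0r.
Qed.

End Jensen.

Section Zdim.
Variable R : comNzRingType.

Lemma zdim (d0 : krull_dim0 R) (x : R) : exists n (y : R), x ^+ n.+1 = x ^+ n.+2 * y.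
Proof.
apply: contrapT => nex.
pose S (z : R) := exists n (r : R), z = x ^+ n * (1 - x * r).
have S1 : S 1 by exists 0%N, 0; rewrite expr0 mulr0 subr0 mulr1.
have SM : forall a b, S a -> S b -> S (a * b).
  move=> a b [n [r ->]] [m [r' ->]]; exists (n + m)%N, (r + r' - x * r * r').
  rewrite exprD; ring.
have I0 : is_ideal (fun z : R => z = 0).
  by split => // [? ? -> ->|? ? ->]; rewrite ?addr0 ?mulr0.
have I0S : forall z : R, z = 0 -> ~ S z.
  move=> z ez [n [r e']]; apply: nex; exists n, r.
  rewrite ez in e'.
  have h : x ^+ n = x ^+ n.+1 * r.
    apply/eqP; rewrite -subr_eq0; apply/eqP; rewrite [RHS]e' exprS; ring.
  by rewrite exprS h [in RHS]exprS; ring.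
have [P [gP maxP]] := @zorn_ideal R S (fun z => z = 0) I0 I0S.
have pP := good_prime S1 SM gP maxP.
case: gP => hP _ PS.
have nPx1 : ~ addid P x 1.
  case=> m [r [hm e]]; apply: (PS m hm); exists 0%N, r.
  rewrite expr0 mul1r; apply/eqP; rewrite eq_sym subr_eq e; apply/eqP; ring.
have [Q [mQ PQ]] := exists_max (addid_ideal x hP) nPx1.
have pQ := max_prime mQ.
have Px : P x.
  apply: (d0 P Q pP pQ) => [z Pz|]; apply: PQ; first exact: addid_sub.
  exact: addid_a.
apply: (PS x Px); exists 1%N, 0; rewrite expr1 mulr0 subr0 mulr1 //.
Qed.

Lemma idem (d0 : krull_dim0 R) (x : R) :
  exists e w : R, exists n : nat, [/\ e * e = e, e = x * w & (x * (1 - e)) ^+ n = 0].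
Proof.
have [n [y e]] := zdim d0 x.
have key : forall k, x ^+ n.+1 = x ^+ (n.+1 + k) * y ^+ k.
  elim=> [|k IH]; first by rewrite addn0 expr0 mulr1.
  rewrite IH [x ^+ (n.+1 + k.+1)]exprD [x ^+ (n.+1 + k)]exprD.
  have -> : x ^+ n.+1 * x ^+ k.+1 * y ^+ k.+1 = (x ^+ k * y ^+ k) * (x ^+ n.+2 * y) by rewrite !exprS; ring.
  rewrite -e; ring.
have h2 := key n.+1.
exists (x ^+ n.+1 * y ^+ n.+1), (x ^+ n * y ^+ n.+1), n.+1; split.
- have -> : x ^+ n.+1 * y ^+ n.+1 * (x ^+ n.+1 * y ^+ n.+1) = (x ^+ (n.+1 + n.+1) * y ^+ n.+1) * y ^+ n.+1 by rewrite exprD; ring.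
  by rewrite -h2.
- by rewrite exprS; ring.
- rewrite exprMn.
  have hi : forall k, (1 - x ^+ n.+1 * y ^+ n.+1) ^+ k.+1 = 1 - x ^+ n.+1 * y ^+ n.+1.
    elim=> [|k IH]; first by rewrite expr1.
    rewrite exprS IH.
    have -> : (1 - x ^+ n.+1 * y ^+ n.+1) * (1 - x ^+ n.+1 * y ^+ n.+1) =
      1 - x ^+ n.+1 * y ^+ n.+1 - x ^+ n.+1 * y ^+ n.+1 + (x ^+ (n.+1 + n.+1) * y ^+ n.+1) * y ^+ n.+1 by rewrite exprD; ring.
    by rewrite -h2; ring.
  rewrite hi.
  have -> : x ^+ n.+1 * (1 - x ^+ n.+1 * y ^+ n.+1) = x ^+ n.+1 - x ^+ (n.+1 + n.+1) * y ^+ n.+1 by rewrite exprD; ring.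
  by rewrite -h2 subrr.
Qed.

End Zdim.

Section Bez.
Variable R : comNzRingType.
Hypothesis ar : arithmetic R.
Hypothesis d0 : krull_dim0 R.

Lemma geom (N : R) n : N ^+ n = 0 -> (1 - N) * \sum_(i < n) N ^+ i = 1.
Proof.
move=> hN; have := subrX1 N n; rewrite hN sub0r => h.
by rewrite -opprB mulNr -h opprK.
Qed.

Lemma idem_mix (g x y p q : R) : g * g = g ->
  (g * x + (1 - g) * y) * (g * p + (1 - g) * q) = g * (x * p) + (1 - g) * (y * q).
Proof.
move=> gg.
have f0 : g * (1 - g) = 0 by rewrite mulrBr mulr1 gg subrr.
have f1 : (1 - g) * (1 - g) = 1 - g by rewrite mulrBr mulr1 mulrC f0 subr0.
transitivity ((g * g) * (x * p) + ((1 - g) * (1 - g)) * (y * q) + (g * (1 - g)) * (x * q + y * p)); first by ring.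
by rewrite gg f0 f1 mul0r addr0.
Qed.

Lemma split2 (a b : R) : exists g : R, [/\ g * g = g,
  divides (g * b + (1 - g) * a) a & divides (g * b + (1 - g) * a) b].
Proof.
have [u [c [c' [h1 h2]]]] := jensen ar a b.
have [g [w [n [gg gu nil]]]] := idem d0 u.
have f0 : g - g * g = 0 by rewrite gg subrr.
exists g; split => //.
- rewrite /divides; exists (g * (w * c) + (1 - g) * 1); rewrite idem_mix // mul1r.
  have e2 : g * a = g * (w * c * b).
    transitivity (g * g * a); first by rewrite gg.
    rewrite {1}gu; transitivity (w * g * (u * a)); first by ring.
    by rewrite h1; ring.
  by rewrite -e2; ring.
- pose t := u * (1 - g); pose S := \sum_(i < n) t ^+ i.
  have ht : t ^+ n = 0 by exact: nil.
  have gS := geom ht.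
  rewrite /divides; exists (g * 1 + (1 - g) * (S * c')); rewrite idem_mix // mul1r.
  have e1 : (1 - g) * b = (1 - g) * (S * c' * a).
    transitivity ((1 - g) * b * ((1 - t) * S)); first by rewrite gS mulr1.
    transitivity (S * (1 - g) * ((1 - u) * b) + S * u * b * (g - g * g)); first by rewrite /t; ring.
    by rewrite f0 h2 mulr0 addr0; ring.
  by rewrite -e1; ring.
Qed.

Lemma fg_nil (y : R) : in_fg_ideal [::] y <-> y = 0.
Proof.
split; first by case=> c ->; rewrite big_ord0.
by move=> ->; exists (fun _ => 0); rewrite big_ord0.
Qed.

Lemma fg_cons (x : R) s y : in_fg_ideal (x :: s) y <->
  exists c z : R, in_fg_ideal s z /\ y = c * x + z.
Proof.
split.
- case=> c ->; rewrite /= big_ord_recl /=.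
  exists (c ord0), (\sum_(i < size s) c (lift ord0 i) * s`_i); split => //.
  by exists (fun i => c (lift ord0 i)).
- case=> c [z [[cz ->] ->]].
  exists (fun i : 'I_(size s).+1 => if unlift ord0 i is Some j then cz j else c).
  rewrite /= big_ord_recl unlift_none /=; congr (_ + _).
  by apply: eq_bigr => i _; rewrite liftK.
Qed.

Lemma bezoutR : bezout R.
Proof.
elim=> [|x s [d0' IH]].
  exists 0 => y; rewrite fg_nil; split; first by move=> ->; exists 0; rewrite mul0r.
  by case=> c ->; rewrite mulr0.
have [g [gg [al ha] [be hb]]] := split2 x d0'.
exists (g * d0' + (1 - g) * x) => y; rewrite fg_cons; split.
- case=> c [z [/IH [c' ->] ->]]; exists (c * al + c' * be).
  move: ha hb; set d := g * d0' + _ => ha hb.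
  by rewrite [in LHS]ha [in LHS]hb; ring.
- case=> c ->; exists (c * (1 - g)), (c * g * d0'); split; first by apply/IH; exists (c * g).
  by ring.
Qed.

Lemma adequate2 (a b : R) : exists r s : R,
    [/\ a = r * s, comaximal r b &
        forall s' : R, ~ is_unit s' -> divides s' s -> ~ comaximal s' b].
Proof.
have [e [w [n [ee ew nil]]]] := idem d0 b.
have f0 : e * (1 - e) = 0 by rewrite mulrBr mulr1 ee subrr.
have h1e : (1 - e) * (1 - e) = 1 - e by rewrite mulrBr mulr1 mulrC f0 subr0.
exists (e * a + (1 - e)), (e + (1 - e) * a); split.
- transitivity (e * e * a + (1 - e) * (1 - e) * a + e * (1 - e) * (a * a + 1)); first by rewrite f0 mul0r addr0 ee h1e; ring.
  by ring.
- rewrite /comaximal; exists (1 - e), w; transitivity ((1 - e) * (1 - e) + e * (1 - e) * a + b * w); first by ring.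
  by rewrite -ew f0 h1e mul0r addr0 subrK.
- move=> s' nu [c hc] [u [v huv]]; apply: nu.
  pose N := v * (b * (1 - e)).
  have hN : N ^+ n = 0 by rewrite /N exprMn nil mulr0.
  have gN := geom hN; set S := \sum_(i < n) N ^+ i in gN.
  rewrite /is_unit; exists (u * (1 - e) * S + c * e).
  have hse : c * s' * e = e.
    rewrite -hc; transitivity (e * e + e * (1 - e) * a); first by ring.
    by rewrite ee f0 mul0r addr0.
  transitivity ((u * s' + v * b) * (1 - e) * S - N * S + c * s' * e); first by rewrite /N; ring.
  have hNe : (1 - e) * N = N by rewrite /N; transitivity (v * b * ((1 - e) * (1 - e))); [ring| rewrite h1e; ring].
  rewrite huv hse mul1r.
  transitivity ((1 - e) * ((1 - N) * S) + e + ((1 - e) * N - N) * S); first by ring.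
  by rewrite hNe subrr mul0r addr0 gN mulr1 subrK.
Qed.

End Bez.

Section Mat.
Variable R : comNzRingType.

Lemma inv1 n : invertible_mx (1%:M : 'M[R]_n).
Proof. by exists 1%:M; rewrite mul1mx. Qed.

Lemma invM n (P Q : 'M[R]_n) : invertible_mx P -> invertible_mx Q -> invertible_mx (P *m Q).
Proof.
move=> [P' [h1 h2]] [Q' [h3 h4]]; exists (Q' *m P'); split.
- by rewrite mulmxA -(mulmxA P) h3 mulmx1 h1.
- by rewrite mulmxA -(mulmxA Q') h2 mulmx1 h4.
Qed.

Lemma inv_tperm n (i j : 'I_n) : invertible_mx (tperm_mx i j : 'M[R]_n).
Proof.
by exists (tperm_mx i j); rewrite /tperm_mx -perm_mxM tperm2 perm_mx1.
Qed.

Lemma mix_mx (g : R) m n p (X1 X2 : 'M[R]_(m, n)) (Y1 Y2 : 'M[R]_(n, p)) : g * g = g ->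
  (g *: X1 + (1 - g) *: X2) *m (g *: Y1 + (1 - g) *: Y2) =
  g *: (X1 *m Y1) + (1 - g) *: (X2 *m Y2).
Proof.
move=> gg.
have f0 : g * (1 - g) = 0 by rewrite mulrBr mulr1 gg subrr.
have f0' : (1 - g) * g = 0 by rewrite mulrC.
have f1 : (1 - g) * (1 - g) = 1 - g by rewrite mulrBr mulr1 f0' subr0.
rewrite !mulmxDl !mulmxDr -!scalemxAl -!scalemxAr !scalerA gg f0 f0' f1 !scale0r.
by rewrite addr0 add0r.
Qed.

Lemma mix_mxl (g : R) m n p (X1 X2 : 'M[R]_(m, n)) (A : 'M[R]_(n, p)) :
  (g *: X1 + (1 - g) *: X2) *m A = g *: (X1 *m A) + (1 - g) *: (X2 *m A).
Proof. by rewrite mulmxDl -!scalemxAl. Qed.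

Lemma mix_inv (g : R) n (P1 P2 : 'M[R]_n) : g * g = g ->
  invertible_mx P1 -> invertible_mx P2 -> invertible_mx (g *: P1 + (1 - g) *: P2).
Proof.
move=> gg [P1' [h1 h2]] [P2' [h3 h4]].
exists (g *: P1' + (1 - g) *: P2'); rewrite !mix_mx // h1 h2 h3 h4.
by rewrite -!scalerDl addrC subrK scale1r.
Qed.

Lemma div_add (d x y : R) : divides d x -> divides d y -> divides d (x + y).
Proof. by move=> [a ->] [b ->]; exists (a + b); rewrite mulrDl. Qed.

Lemma div_mul (d c x : R) : divides d x -> divides d (c * x).
Proof. by move=> [a ->]; exists (c * a); rewrite mulrA. Qed.

Lemma div_trans (d e x : R) : divides d e -> divides e x -> divides d x.
Proof. by move=> [a ->] [b ->]; exists (b * a); rewrite mulrA. Qed.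

Lemma div_sum (d : R) n (F : 'I_n -> R) : (forall i, divides d (F i)) -> divides d (\sum_(i < n) F i).
Proof.
move=> h; elim/big_ind: _ => //; first by exists 0; rewrite mul0r.
exact: div_add.
Qed.

Lemma div_mxmul (d : R) m n p (P : 'M[R]_(m, n)) (A : 'M[R]_(n, p)) :
  (forall i j, divides d (A i j)) -> forall i j, divides d ((P *m A) i j).
Proof.
move=> h i j; rewrite mxE; apply: div_sum => k.
by apply: div_mul; apply: h.
Qed.

End Mat.

Section Piv.
Variable R : comNzRingType.
Hypothesis ar : arithmetic R.
Hypothesis d0 : krull_dim0 R.

Lemma div_mxmulr (d : R) m n p (A : 'M[R]_(m, n)) (Q : 'M[R]_(n, p)) :
  (forall i j, divides d (A i j)) -> forall i j, divides d ((A *m Q) i j).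
Proof.
move=> h i j; rewrite mxE; apply: div_sum => k.
by rewrite mulrC; apply: div_mul; apply: h.
Qed.

Lemma mixE (a b : R) m n (M1 M2 : 'M[R]_(m, n)) i j :
  (a *: M1 + b *: M2) i j = a * M1 i j + b * M2 i j.
Proof. by rewrite !mxE. Qed.

Lemma pivot m n (A : 'M[R]_(m.+1, n.+1)) : exists P Q,
  [/\ invertible_mx P, invertible_mx Q &
     forall i j, divides ((P *m A *m Q) 0 0) (A i j)].
Proof.
suff : forall s : seq ('I_m.+1 * 'I_n.+1), exists P Q,
  [/\ invertible_mx P, invertible_mx Q &
     forall p, p \in s -> divides ((P *m A *m Q) 0 0) (A p.1 p.2)].
  move=> /(_ (enum [set: ('I_m.+1 * 'I_n.+1)%type])) [P [Q [hP hQ h]]].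
  by exists P, Q; split => // i j; apply: (h (i, j)); rewrite mem_enum in_setT.
elim=> [|p s [P1 [Q1 [hP1 hQ1 IH]]]].
  by exists 1%:M, 1%:M; split => //; apply: inv1.
set d1 := (P1 *m A *m Q1) 0 0.
have [g [gg hd1 hb]] := split2 ar d0 d1 (A p.1 p.2).
exists (g *: tperm_mx 0 p.1 + (1 - g) *: P1), (g *: tperm_mx 0 p.2 + (1 - g) *: Q1).
have e : ((g *: tperm_mx 0 p.1 + (1 - g) *: P1) *m A *m (g *: tperm_mx 0 p.2 + (1 - g) *: Q1)) 0 0
   = g * A p.1 p.2 + (1 - g) * d1.
  rewrite mix_mxl mix_mx // mixE -xrowE -xcolE.
  by rewrite [in X in g * X]mxE [in X in g * X]mxE tpermL tpermL.
split; [exact: (mix_inv gg (inv_tperm _ _ _) hP1) | exact: (mix_inv gg (inv_tperm _ _ _) hQ1)|].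
move=> q; rewrite inE => /orP [/eqP -> | qs]; rewrite e //.
exact: div_trans hd1 (IH q qs).
Qed.

End Piv.

Section Kap.
Variable R : comNzRingType.
Hypothesis ar : arithmetic R.
Hypothesis d0 : krull_dim0 R.

Lemma block_diag m n (u : 'M[R]_1) (X : 'M[R]_(m, n)) :
  is_diagonal X -> is_diagonal (block_mx u 0 0 X : 'M_(1 + m, 1 + n)).
Proof.
move=> hX i j; rewrite -(splitK i) -(splitK j).
case: (split i) => i'; case: (split j) => j' /= neq.
- by exfalso; apply: neq; rewrite !ord1.
- by rewrite block_mxEur mxE.
- by rewrite block_mxEdl mxE.
- rewrite block_mxEdr; apply: hX => e; apply: neq; by rewrite /= e.
Qed.

Lemma inv_block1 n (P : 'M[R]_n) : invertible_mx P ->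
  invertible_mx (block_mx 1%:M 0 0 P : 'M_(1 + n)).
Proof.
move=> [P' [h1 h2]]; exists (block_mx 1%:M 0 0 P').
rewrite !mulmx_block !mul1mx !mulmx1 !mul0mx !mulmx0 !addr0 !add0r h1 h2.
by rewrite -!scalar_mx_block.
Qed.

Lemma inv_L m (be : 'M[R]_(m, 1)) :
  invertible_mx (block_mx 1%:M 0 (- be) 1%:M : 'M_(1 + m)).
Proof.
exists (block_mx 1%:M 0 be 1%:M).
rewrite !mulmx_block !mul1mx !mulmx1 !mul0mx !mulmx0 !addr0 !add0r.
by rewrite addNr addrN -!scalar_mx_block.
Qed.

Lemma inv_U n (al : 'M[R]_(1, n)) :
  invertible_mx (block_mx 1%:M (- al) 0 1%:M : 'M_(1 + n)).
Proof.
exists (block_mx 1%:M al 0 1%:M).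
rewrite !mulmx_block !mul1mx !mulmx1 !mul0mx !mulmx0 !addr0 !add0r.
by rewrite addNr addrN -!scalar_mx_block.
Qed.

Lemma kapl : kaplansky R.
Proof.
move=> m; elim: m => [|m IH] n A.
  by exists 1%:M, 1%:M; split; [apply: inv1|apply: inv1|move=> [] ].
case: n A => [|n] A.
  by exists 1%:M, 1%:M; split; [apply: inv1|apply: inv1|move=> i [] ].
have [P0 [Q0 [hP0 hQ0 hpiv]]] := pivot ar d0 A.
have [B eqB] : exists B : 'M[R]_(1 + m, 1 + n), B = P0 *m A *m Q0 by eexists.
have piv : forall i j, divides (B 0 0) (B i j).
  by move=> i j; rewrite eqB; apply: div_mxmulr; apply: div_mxmul.
pose u := ulsubmx B.
have hu : u 0 0 = B 0 0.
  by rewrite !mxE; congr (B _ _); apply: val_inj.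
have piv' : forall i j, divides (u 0 0) (B i j) by move=> i j; rewrite hu.
have [f hf] : exists f : 'I_n -> R, forall j, ursubmx B 0 j = f j * u 0 0.
  apply: (@fin_all_exists _ (fun _ => R) (fun j c => ursubmx B 0 j = c * u 0 0)) => j.
  by set dd := u 0 0; rewrite !mxE; apply: piv'.
have [h hh] : exists h : 'I_m -> R, forall i, dlsubmx B i 0 = h i * u 0 0.
  apply: (@fin_all_exists _ (fun _ => R) (fun i c => dlsubmx B i 0 = c * u 0 0)) => i.
  by set dd := u 0 0; rewrite !mxE; apply: piv'.
pose al : 'M[R]_(1, n) := \row_j f j.
pose be : 'M[R]_(m, 1) := \col_i h i.
have hur : ursubmx B = u *m al.
  by apply/matrixP => i j; rewrite (ord1 i) hf [RHS]mxE big_ord1 [al _ _]mxE mulrC.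
have hdl : dlsubmx B = be *m u.
  by apply/matrixP => i j; rewrite (ord1 j) hh [RHS]mxE big_ord1 [be _ _]mxE.
pose L : 'M[R]_(1 + m) := block_mx 1%:M 0 (- be) 1%:M.
pose U : 'M[R]_(1 + n) := block_mx 1%:M (- al) 0 1%:M.
pose D' := drsubmx B - be *m u *m al.
have eB : L *m B *m U = block_mx u 0 0 D'.
  rewrite -[B]submxK hur hdl /L /U !mulmx_block.
  rewrite !mul1mx !mulmx1 !mul0mx !mulmx0 !mulNmx !mulmxN ?addr0 ?add0r.
  by rewrite -/u !addNr mul0mx oppr0 add0r addrC /D' mulmxA.
have [P' [Q' [hP' hQ' hD]]] := IH n D'.
exists (block_mx 1%:M 0 0 P' *m L *m P0), (Q0 *m U *m block_mx 1%:M 0 0 Q').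
split.
- by apply: invM => //; apply: invM; [exact: inv_block1|exact: inv_L].
- by apply: invM; [apply: invM|exact: inv_block1] => //; exact: inv_U.
- have -> : block_mx 1%:M 0 0 P' *m L *m P0 *m A *m (Q0 *m U *m block_mx 1%:M 0 0 Q')
     = block_mx 1%:M 0 0 P' *m (L *m B *m U) *m block_mx 1%:M 0 0 Q'.
    by rewrite eqB !mulmxA.
  rewrite eB !mulmx_block !mul1mx !mulmx1 !mul0mx !mulmx0 !addr0 !add0r.
  by rewrite mul0mx; exact: block_diag.
Qed.

End Kap.

Theorem theorem3p6 (R : comNzRingType) :
  arithmetic R -> krull_dim0 R -> kaplansky R /\ adequate R.
Proof.
move=> ar d0; split; first exact: (kapl ar d0).
split; first exact: (bezoutR ar d0).
by move=> a b _; apply: adequate2.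
Qed.
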